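(* Let $q$ be a prime power, $m>4$, $F=\mathbb F_q$, $V=\mathbb F_q^m$. Let $E\subset E_1$ be subspaces of $\bigwedge^2V$ with $\dim E_1=\dim E+1$, and assume $E$ is decomposable and $E_1$ is not decomposable. Then: (i) the set $E_1\setminus E$ contains at most $q^2(q-1)$ decomposable vectors; (ii) if $E_1\setminus E$ contains a decomposable vector $\omega$ such that $V_\omega\subseteq V^E$, then $E_1\setminus E$ contains exactly $q^2(q-1)$ decomposable vectors.
   Context: A nonzero $\omega\in\bigwedge^2V$ is decomposable if $\omega=u\wedge v$ for some $u,v\in V$; a subspace is decomposable if all its nonzero elements are decomposable. For $\omega\in\bigwedge^2V$, $V_\omega=\{v\in V: v\wedge\omega=0\}$; for a subspace $E$, $V^E=\sum_{0\ne\omega\in E}V_\omega$. *)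

(* Defs.v *)
From HB Require Import structures.
From mathcomp Require Import all_boot all_order all_algebra.
Set Implicit Arguments. Unset Strict Implicit. Unset Printing Implicit Defensive.
Import GRing.Theory.
Local Open Scope ring_scope.

(* Model: V = F^m as row vectors 'rV[F]_m; /\^2 V as the space of alternating
   m x m matrices, the coordinate of e_i /\ e_j (i<j) being A i j. *)

Section Ext.
Variables (F : finFieldType) (m : nat).

Definition wedge (u v : 'rV[F]_m) : 'M[F]_m := u^T *m v - v^T *m u.

Definition alternating (A : 'M[F]_m) : bool :=
  [forall i, A i i == 0] && [forall i, forall j, A j i == - A i j].

Definition decomposable (w : 'M[F]_m) : bool :=
  (w != 0) && [exists u, exists v, w == wedge u v].

Definition decomposable_space (E : {vspace 'M[F]_m}) : Prop :=
  forall w, w \in E -> w != 0 -> decomposable w.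

(* v /\ w = 0 in /\^3 V: coefficient of e_i/\e_j/\e_k (i<j<k) vanishes *)
Definition wedge3_zero (w : 'M[F]_m) (v : 'rV[F]_m) : bool :=
  [forall i : 'I_m, forall j : 'I_m, forall k : 'I_m,
     ((i < j)%N && (j < k)%N) ==>
     (v 0 i * w j k - v 0 j * w i k + v 0 k * w i j == 0)].

Definition Vw (w : 'M[F]_m) : {vspace 'rV[F]_m} :=
  <<[seq v <- enum 'rV[F]_m | wedge3_zero w v]>>%VS.

Definition VE (E : {vspace 'M[F]_m}) : {vspace 'rV[F]_m} :=
  (\sum_(w : 'M[F]_m | (w \in E) && (w != 0%R)) Vw w)%VS.

Definition dec_diff (E E1 : {vspace 'M[F]_m}) : {set 'M[F]_m} :=
  [set w : 'M[F]_m | (w \in E1) && (w \notin E) && decomposable w].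

End Ext.

(* Main.v *)
Require Import Defs.
From mathcomp Require Import all_boot all_order all_algebra finfield.
From mathcomp Require Import ring.
Set Implicit Arguments. Unset Strict Implicit. Unset Printing Implicit Defensive.
Import GRing.Theory.
Local Open Scope ring_scope.

Lemma zmod_helper (V : zmodType) (A B C D : V) : A + D = B + C -> A - B = C - D.
Proof.
move=> H; apply/eqP; rewrite subr_eq -addrA (addrC (-D)) addrA (addrC C) -H addrK //.
Qed.

Section Gen.
Variables (K : fieldType) (vT : vectType K).
Implicit Types (a b v : vT).

Lemma span2P v a b : reflect (exists c d, v = c *: a + d *: b) (v \in <<[:: a; b]>>%VS).
Proof.
rewrite span_cons span_seq1; apply: (iffP memv_addP).
  by move=> [x /vlineP[c ->] [y /vlineP[d ->] ->]]; exists c, d.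
move=> [c [d ->]]; exists (c *: a); first by rewrite memvZ ?memv_line.
by exists (d *: b); rewrite ?memvZ ?memv_line.
Qed.

Lemma span2_mem v a b c d : v = c *: a + d *: b -> v \in <<[:: a; b]>>%VS.
Proof. by move=> ->; apply/span2P; exists c, d. Qed.

Lemma span_closed (P : pred vT) (X : seq vT) :
  P 0 -> (forall u v, P u -> P v -> P (u + v)) -> (forall c u, P u -> P (c *: u)) ->
  (forall x, x \in X -> P x) -> forall v, v \in <<X>>%VS -> P v.
Proof.
move=> P0 PD PZ PX v; rewrite -{1}[X]/(tval (in_tuple X)) => /coord_span ->.
apply: (big_ind P) => // i _; apply: PZ; apply: PX; exact: mem_nth.
Qed.

Lemma dim1_eq (U V : {vspace vT}) : \dim U = 1%N -> (V <= U)%VS -> V != 0%VS -> V = U.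
Proof.
move=> dU VU Vnz; apply/eqP; rewrite -(dimv_leqif_eq VU) dU eqn_leq.
rewrite -dU dimvS //= dU; move: Vnz; rewrite -dimv_eq0; by case: (\dim V).
Qed.

Lemma lines_span (P : {vspace vT}) p p' : \dim P = 2%N -> p \in P -> p' \in P ->
  p != 0 -> p' != 0 -> <[p]>%VS != <[p']>%VS -> (P <= <[p]> + <[p']>)%VS.
Proof.
move=> dP pP p'P pnz p'nz neq.
have cap0 : (<[p]> :&: <[p']> = 0)%VS.
  apply/eqP; apply: contraR neq => cnz.
  have d1 : \dim <[p]> = 1%N by rewrite dim_vline pnz.
  have d1' : \dim <[p']> = 1%N by rewrite dim_vline p'nz.
  by rewrite -(dim1_eq d1 (capvSl _ _) cnz) (dim1_eq d1' (capvSr _ _) cnz).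
have sP : (<[p]> + <[p']> <= P)%VS by rewrite subv_add -!memvE pP p'P.
have := dimv_sum_cap <[p]> <[p']>; rewrite cap0 dimv0 addn0 !dim_vline pnz p'nz => ds.
by rewrite -(geq_leqif (dimv_leqif_sup sP)) ds dP.
Qed.

Lemma span2_l a b : a \in <<[:: a; b]>>%VS.
Proof. by apply: memv_span; rewrite inE eqxx. Qed.
Lemma span2_r a b : b \in <<[:: a; b]>>%VS.
Proof. by apply: memv_span; rewrite !inE eqxx orbT. Qed.

End Gen.

Section Aux.
Variables (F : finFieldType) (m : nat).
Implicit Types (a b u v x y f g : 'rV[F]_m) (w : 'M[F]_m).

Definition dot f u : F := (f *m u^T) 0 0.
Definition bil w f g : F := (f *m w *m g^T) 0 0.
Definition Qf w f1 f2 f3 f4 :=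
  bil w f1 f2 * bil w f3 f4 - bil w f1 f3 * bil w f2 f4 + bil w f1 f4 * bil w f2 f3.
Definition iso_def w : bool :=
  [forall f1, [forall f2, [forall f3, [forall f4, Qf w f1 f2 f3 f4 == 0]]]].
Fact iso_key : unit. Proof. exact: tt. Qed.
Definition iso := locked_with iso_key iso_def.
Canonical iso_unlockable := [unlockable fun iso].

Lemma isoP w : reflect (forall f1 f2 f3 f4, Qf w f1 f2 f3 f4 = 0) (iso w).
Proof.
rewrite unlock /iso_def.
apply: (iffP idP).
  by move=> /forallP H f1 f2 f3 f4; move: (H f1) => /forallP /(_ f2) /forallP /(_ f3) /forallP /(_ f4) /eqP.
by move=> H; do 4 (apply/forallP => ?); apply/eqP; apply: H.
Qed.

Lemma bilD w w' f g : bil (w + w') f g = bil w f g + bil w' f g.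
Proof. by rewrite /bil mulmxDr mulmxDl mxE. Qed.
Lemma bilZ c w f g : bil (c *: w) f g = c * bil w f g.
Proof. by rewrite /bil -scalemxAr -scalemxAl mxE. Qed.
Lemma bilN w f g : bil (- w) f g = - bil w f g.
Proof. by rewrite -scaleN1r bilZ mulN1r. Qed.

Lemma dotC f u : dot f u = dot u f.
Proof.
rewrite /dot !mxE; apply: eq_bigr => k _; rewrite !mxE mulrC //.
Qed.

Lemma mx11_mul (A : 'M[F]_(1,1)) (B : 'M[F]_(1,1)) : (A *m B) 0 0 = A 0 0 * B 0 0.
Proof. by rewrite mxE big_ord1. Qed.

Lemma bil_wedge u v f g : bil (wedge u v) f g = dot f u * dot g v - dot f v * dot g u.
Proof.
rewrite /bil /wedge mulmxBr mulmxBl !mulmxA -[f *m u^T *m v *m g^T]mulmxA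
  -[f *m v^T *m u *m g^T]mulmxA.
rewrite [X in X = _]mxE [X in _ + X]mxE !mx11_mul /dot.
have tE : forall a b : 'rV[F]_m, (a *m b^T) 0 0 = (b *m a^T) 0 0 by move=> a b; exact: dotC.
by rewrite (tE v g) (tE u g).
Qed.

Lemma wedgeE u v i j : wedge u v i j = u 0 i * v 0 j - v 0 i * u 0 j.
Proof. by rewrite /wedge !mxE !big_ord1 !mxE. Qed.

Lemma iso_wedge u v : iso (wedge u v).
Proof. apply/isoP => f1 f2 f3 f4; rewrite /Qf !bil_wedge; ring. Qed.

Lemma bil_delta w i j : bil w (delta_mx 0 i) (delta_mx 0 j) = w i j.
Proof.
by rewrite /bil -rowE trmx_delta -colE !mxE.
Qed.


Lemma plucker w : iso w -> forall i j k l,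
  w i j * w k l - w i k * w j l + w i l * w j k = 0.
Proof.
move=> /isoP H i j k l.
by have := H (delta_mx 0 i) (delta_mx 0 j) (delta_mx 0 k) (delta_mx 0 l); rewrite /Qf !bil_delta.
Qed.

Lemma iso_dec w : iso w -> w != 0 -> decomposable w.
Proof.
move=> Hw nz; rewrite /decomposable nz /=.
have [[i j] /= wij | H0] := pickP (fun ij : 'I_m * 'I_m => w ij.1 ij.2 != 0); last first.
  case/eqP: nz; apply/matrixP => i j; rewrite mxE.
  by have := H0 (i, j); rewrite /= => /negbFE /eqP.
apply/existsP; exists ((w i j)^-1 *: row i w); apply/existsP; exists (row j w).
apply/eqP/matrixP => k l; rewrite wedgeE !mxE.
have P := plucker Hw i j k l.
have -> : w k l = (w i j)^-1 * (w i j * w k l) by field.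
have -> : w i j * w k l = w i k * w j l - w i l * w j k.
  by apply/eqP; rewrite -subr_eq0 -P; apply/eqP; ring.
ring.
Qed.

Lemma dec_iso w : decomposable w -> iso w.
Proof. by case/andP=> _ /existsP[u /existsP[v /eqP->]]; exact: iso_wedge. Qed.

Lemma dec_neq0 w : decomposable w -> w != 0.
Proof. by case/andP. Qed.

Lemma iso0 : iso 0.
Proof. by apply/isoP => *; rewrite /Qf /bil !mulmx0 !mul0mx !mxE; ring. Qed.

Lemma isoZ c w : iso w -> iso (c *: w).
Proof.
move=> /isoP H; apply/isoP => f1 f2 f3 f4; have := H f1 f2 f3 f4.
rewrite /Qf !bilZ => E0.
have -> : c * bil w f1 f2 * (c * bil w f3 f4) - c * bil w f1 f3 * (c * bil w f2 f4) +
  c * bil w f1 f4 * (c * bil w f2 f3) = c ^+ 2 * (bil w f1 f2 * bil w f3 f4 -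
   bil w f1 f3 * bil w f2 f4 + bil w f1 f4 * bil w f2 f3) by ring.
by rewrite E0 mulr0.
Qed.

Lemma iso3 (a b c : 'M[F]_m) : iso a -> iso b -> iso c -> iso (a + b) -> iso (a + c) -> iso (b + c) ->
  iso (a + b + c).
Proof.
move=> /isoP Ha /isoP Hb /isoP Hc /isoP Hab /isoP Hac /isoP Hbc; apply/isoP => f1 f2 f3 f4.
move: (Ha f1 f2 f3 f4) (Hb f1 f2 f3 f4) (Hc f1 f2 f3 f4) (Hab f1 f2 f3 f4)
  (Hac f1 f2 f3 f4) (Hbc f1 f2 f3 f4); rewrite /Qf !bilD.
set a12 := bil a f1 f2; set a13 := bil a f1 f3; set a14 := bil a f1 f4;
set a23 := bil a f2 f3; set a24 := bil a f2 f4; set a34 := bil a f3 f4;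
set b12 := bil b f1 f2; set b13 := bil b f1 f3; set b14 := bil b f1 f4;
set b23 := bil b f2 f3; set b24 := bil b f2 f4; set b34 := bil b f3 f4;
set c12 := bil c f1 f2; set c13 := bil c f1 f3; set c14 := bil c f1 f4;
set c23 := bil c f2 f3; set c24 := bil c f2 f4; set c34 := bil c f3 f4.
move=> E1 E2 E3 E4 E5 E6.
match goal with |- ?G = 0 =>
  match type of E1 with ?L1 = 0 => match type of E2 with ?L2 = 0 =>
  match type of E3 with ?L3 = 0 => match type of E4 with ?L4 = 0 =>
  match type of E5 with ?L5 = 0 => match type of E6 with ?L6 = 0 =>
  transitivity (L4 + L5 + L6 - L1 - L2 - L3); [ring | rewrite E1 E2 E3 E4 E5 E6; ring]
  end end end end end end end.
Qed.

Lemma isoAZ (x y : 'M[F]_m) c : iso x -> iso y -> iso (x + y) -> iso (x + c *: y).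
Proof.
move=> /isoP Hx /isoP Hy /isoP Hxy; apply/isoP => f1 f2 f3 f4.
move: (Hx f1 f2 f3 f4) (Hy f1 f2 f3 f4) (Hxy f1 f2 f3 f4); rewrite /Qf !bilD !bilZ.
set a12 := bil x f1 f2; set a13 := bil x f1 f3; set a14 := bil x f1 f4;
set a23 := bil x f2 f3; set a24 := bil x f2 f4; set a34 := bil x f3 f4;
set b12 := bil y f1 f2; set b13 := bil y f1 f3; set b14 := bil y f1 f4;
set b23 := bil y f2 f3; set b24 := bil y f2 f4; set b34 := bil y f3 f4.
move=> E1 E2 E3.
match goal with |- ?G = 0 =>
  match type of E1 with ?L1 = 0 => match type of E2 with ?L2 = 0 =>
  match type of E3 with ?L3 = 0 =>
  transitivity ((1 - c) * L1 + (c ^+ 2 - c) * L2 + c * L3); [ring | rewrite E1 E2 E3; ring]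
  end end end end.
Qed.


Lemma wedgeDl u u' v : wedge (u + u') v = wedge u v + wedge u' v.
Proof. by apply/matrixP => i j; rewrite !wedgeE [in RHS]mxE ?wedgeE !mxE; ring. Qed.
Lemma wedgeDr u v v' : wedge u (v + v') = wedge u v + wedge u v'.
Proof. by apply/matrixP => i j; rewrite !wedgeE [in RHS]mxE ?wedgeE !mxE; ring. Qed.
Lemma wedgeZl c u v : wedge (c *: u) v = c *: wedge u v.
Proof. by apply/matrixP => i j; rewrite !wedgeE [in RHS]mxE ?wedgeE !mxE; ring. Qed.
Lemma wedgeZr c u v : wedge u (c *: v) = c *: wedge u v.
Proof. by apply/matrixP => i j; rewrite !wedgeE [in RHS]mxE ?wedgeE !mxE; ring. Qed.
Lemma wedgeC u v : wedge v u = - wedge u v.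
Proof. by apply/matrixP => i j; rewrite !wedgeE [in RHS]mxE ?wedgeE; ring. Qed.
Lemma wedgeii u : wedge u u = 0.
Proof. by apply/matrixP => i j; rewrite !wedgeE [in RHS]mxE ?wedgeE; ring. Qed.
Lemma wedge0r u : wedge u 0 = 0.
Proof. by apply/matrixP => i j; rewrite !wedgeE [in RHS]mxE ?wedgeE !mxE; ring. Qed.
Lemma wedge0l u : wedge 0 u = 0.
Proof. by apply/matrixP => i j; rewrite !wedgeE [in RHS]mxE ?wedgeE !mxE; ring. Qed.

Definition T3 w v (i j k : 'I_m) := v 0 i * w j k - v 0 j * w i k + v 0 k * w i j.

Section T3.
Variables (w : 'M[F]_m) (v : 'rV[F]_m).
Hypotheses (wd : forall i, w i i = 0) (wa : forall i j, w j i = - w i j).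
Lemma T3s12 i j k : T3 w v j i k = - T3 w v i j k.
Proof. by rewrite /T3 (wa i j); ring. Qed.
Lemma T3s23 i j k : T3 w v i k j = - T3 w v i j k.
Proof. by rewrite /T3 (wa j k); ring. Qed.
Lemma T3d12 i k : T3 w v i i k = 0.
Proof. by rewrite /T3 wd; ring. Qed.
Lemma T3d23 i j : T3 w v i j j = 0.
Proof. by rewrite /T3 wd; ring. Qed.

Lemma T3_all : wedge3_zero w v -> forall i j k, T3 w v i j k = 0.
Proof.
move=> /forallP H.
have S (i j k : 'I_m) : (i < j < k)%N -> T3 w v i j k = 0.
  move=> ijk; have := H i => /forallP /(_ j) /forallP /(_ k) /implyP /(_ ijk) /eqP.
  by rewrite /T3.
have L (i j k : 'I_m) : (i < j)%N -> T3 w v i j k = 0.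
  move=> ij; case: (ltngtP j k) => [jk | kj | /val_inj ->]; first by rewrite S // ij.
  - case: (ltngtP i k) => [ik | ki | /val_inj ->].
    + by rewrite T3s23 S ?oppr0 // ik kj.
    + by rewrite T3s23 T3s12 opprK S // ki ij.
    + by rewrite T3s23 T3d12 oppr0.
  - by rewrite T3d23.
move=> i j k; case: (ltngtP i j) => [ij | ji | /val_inj ->]; first exact: L.
  by rewrite -[T3 _ _ _ _ _]opprK -T3s12 L // oppr0.
exact: T3d12.
Qed.
End T3.

Lemma wedge_diag a b i : wedge a b i i = 0.
Proof. by rewrite wedgeE; ring. Qed.
Lemma wedge_anti a b i j : wedge a b j i = - wedge a b i j.
Proof. by rewrite !wedgeE; ring. Qed.

Lemma w3z_span a b v : v \in <<[:: a; b]>>%VS -> wedge3_zero (wedge a b) v.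
Proof.
move=> /span2P [c [d ->]]; apply/forallP => i; apply/forallP => j; apply/forallP => k.
apply/implyP => _; rewrite !wedgeE !mxE; apply/eqP; ring.
Qed.

Lemma span_Vw a b : (<<[:: a; b]>> <= Vw (wedge a b))%VS.
Proof.
apply/subvP => v vin; apply: memv_span; rewrite mem_filter mem_enum andbT.
exact: w3z_span.
Qed.

Lemma w3z_mem a b v : wedge a b != 0 -> wedge3_zero (wedge a b) v -> v \in <<[:: a; b]>>%VS.
Proof.
move=> nz H; have T := T3_all (wedge_diag a b) (wedge_anti a b) H.
have [[i j] /= wij | H0] := pickP (fun ij : 'I_m * 'I_m => wedge a b ij.1 ij.2 != 0); last first.
  case/eqP: nz; apply/matrixP => i j; rewrite [RHS]mxE.
  by have := H0 (i, j); rewrite /= => /negbFE /eqP.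
apply: (@span2_mem _ _ _ _ _ ((v 0 i * b 0 j - v 0 j * b 0 i) / wedge a b i j)
   ((v 0 j * a 0 i - v 0 i * a 0 j) / wedge a b i j)).
apply/rowP => k; rewrite (wedgeE a b i j) !mxE.
have := T i j k; rewrite /T3 !wedgeE => Tk.
rewrite wedgeE in wij.
apply: (mulfI wij); apply/eqP; rewrite -subr_eq0; apply/eqP.
match type of Tk with ?L = 0 => transitivity L; [field; exact: wij | exact: Tk] end.
Qed.

Lemma Vw_span a b : wedge a b != 0 -> Vw (wedge a b) = <<[:: a; b]>>%VS.
Proof.
move=> nz; apply/eqP; rewrite eqEsubv span_Vw andbT.
apply/span_subvP => v; rewrite mem_filter => /andP[H _]; exact: w3z_mem.
Qed.

Lemma dot_coord n (X : n.-tuple 'rV[F]_m) i v :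
  dot (\row_k coord X i (delta_mx 0 k)) v = coord X i v.
Proof.
rewrite {2}[v]row_sum_delta linear_sum /dot mxE; apply: eq_bigr => k _.
by rewrite linearZ /= !mxE mulrC.
Qed.

Lemma dual n (X : n.-tuple 'rV[F]_m) : free X -> forall i : 'I_n,
  exists f, forall j : 'I_n, dot f X`_j = (j == i)%:R.
Proof.
move=> fX i; exists (\row_k coord X i (delta_mx 0 k)) => j.
by rewrite dot_coord coord_free.
Qed.

Lemma wedge_eq0 a b : wedge a b = 0 <-> (b == 0) || (a \in <[b]>%VS).
Proof.
split; last first.
  by case/orP => [/eqP -> | /vlineP [k ->]]; rewrite ?wedge0r // wedgeZl wedgeii scaler0.
move=> H; case: eqP => //= /eqP bnz.
have [i bi] : exists i, b 0 i != 0.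
  apply/existsP; move: bnz; apply: contraR; rewrite negb_exists => /forallP H0.
  by apply/eqP/rowP => i; rewrite mxE; apply/eqP; move: (H0 i); rewrite negbK.
apply/vlineP; exists (a 0 i / b 0 i); apply/rowP => j; rewrite !mxE.
have := congr1 (fun M : 'M[F]_m => M j i) H; rewrite wedgeE mxE => E0.
apply: (mulIf bi); apply/eqP; rewrite -subr_eq0; apply/eqP.
transitivity (a 0 j * b 0 i - b 0 j * a 0 i); [field; exact: bi | exact: E0].
Qed.

Lemma free2 a b : wedge a b != 0 -> free [:: a; b].
Proof.
move=> nz; rewrite free_cons seq1_free span_seq1.
apply/andP; split.
  by apply: contra nz => H; apply/eqP/wedge_eq0; rewrite H orbT.
by apply: contra nz => /eqP ->; rewrite wedge0r.
Qed.

Lemma dim_span2 a b : wedge a b != 0 -> \dim <<[:: a; b]>> = 2.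
Proof. by move/free2 => /eqP. Qed.

Lemma meet a b c d : wedge a b != 0 -> wedge c d != 0 ->
  iso (wedge a b + wedge c d) -> (<<[:: a; b]>> :&: <<[:: c; d]>>)%VS != 0%VS.
Proof.
move=> nab ncd /isoP H; apply/negP => /eqP cap0.
have fX : free (in_tuple [:: a; b; c; d]).
  rewrite /free /=; apply/eqP.
  have := dimv_sum_cap <<[:: a; b]>> <<[:: c; d]>>.
  rewrite cap0 dimv0 addn0 !dim_span2 // -span_cat /= => ->; done.
have [f1 H1] := dual fX (Ordinal (isT : (0 < 4)%N)).
have [f2 H2] := dual fX (Ordinal (isT : (1 < 4)%N)).
have [f3 H3] := dual fX (Ordinal (isT : (2 < 4)%N)).
have [f4 H4] := dual fX (Ordinal (isT : (3 < 4)%N)).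
have := H f1 f2 f3 f4; rewrite /Qf !(bilD (wedge a b) (wedge c d)) !bil_wedge.
move: (H1 (Ordinal (isT : (0 < 4)%N))) (H1 (Ordinal (isT : (1 < 4)%N)))
  (H1 (Ordinal (isT : (2 < 4)%N))) (H1 (Ordinal (isT : (3 < 4)%N))) => /= -> -> -> ->.
move: (H2 (Ordinal (isT : (0 < 4)%N))) (H2 (Ordinal (isT : (1 < 4)%N)))
  (H2 (Ordinal (isT : (2 < 4)%N))) (H2 (Ordinal (isT : (3 < 4)%N))) => /= -> -> -> ->.
move: (H3 (Ordinal (isT : (0 < 4)%N))) (H3 (Ordinal (isT : (1 < 4)%N)))
  (H3 (Ordinal (isT : (2 < 4)%N))) (H3 (Ordinal (isT : (3 < 4)%N))) => /= -> -> -> ->.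
move: (H4 (Ordinal (isT : (0 < 4)%N))) (H4 (Ordinal (isT : (1 < 4)%N)))
  (H4 (Ordinal (isT : (2 < 4)%N))) (H4 (Ordinal (isT : (3 < 4)%N))) => /= -> -> -> ->.
move=> E; have : (1:F) == 0 by rewrite -[X in _ == X]E; apply/eqP; ring.
by rewrite oner_eq0.
Qed.

Lemma wedge_rep a b v : wedge a b != 0 -> v \in <<[:: a; b]>>%VS -> v != 0 ->
  exists y, wedge a b = wedge v y.
Proof.
move=> nz /span2P [c [d ->]] vnz.
have [c0 | cnz] := eqVneq c 0.
  have dnz : d != 0 by apply: contra vnz => /eqP ->; rewrite c0 !scale0r addr0.
  exists (- d^-1 *: a); rewrite c0 scale0r add0r.
  apply/matrixP => i j; rewrite !wedgeE !mxE; field; exact: dnz.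
exists (c^-1 *: b); apply/matrixP => i j; rewrite !wedgeE !mxE; field; exact: cnz.
Qed.

Lemma meet_iso a b c d p : p != 0 -> p \in <<[:: a; b]>>%VS -> p \in <<[:: c; d]>>%VS ->
  wedge a b != 0 -> wedge c d != 0 -> iso (wedge a b + wedge c d).
Proof.
move=> pnz p1 p2 n1 n2.
have [y ->] := wedge_rep n1 p1 pnz; have [z ->] := wedge_rep n2 p2 pnz.
by rewrite -wedgeDr iso_wedge.
Qed.

Lemma w3zZ c w v : c != 0 -> wedge3_zero (c *: w) v -> wedge3_zero w v.
Proof.
move=> cnz /forallP H; apply/forallP => i; have := H i => /forallP H1.
apply/forallP => j; have := H1 j => /forallP H2.
apply/forallP => k; have := H2 k => /implyP H3; apply/implyP => ijk.
have := H3 ijk; rewrite !mxE => /eqP E0; apply/eqP.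
apply: (mulfI cnz); rewrite mulr0 -E0; ring.
Qed.

Lemma dec_ex w : decomposable w -> exists a b, w = wedge a b /\ wedge a b != 0.
Proof.
by case/andP => nz /existsP [a /existsP [b /eqP E0]]; exists a, b; rewrite -E0.
Qed.

Lemma funnel (A B : {vspace 'rV[F]_m}) v0 b1 b2 bb s :
  (A :&: B = 0)%VS -> B = <<[:: b1; b2]>>%VS -> v0 \in A -> v0 != 0 ->
  decomposable s -> v0 \in Vw s -> bb \in B -> bb \in Vw s -> bb != 0 ->
  s \in <<[:: wedge v0 b1; wedge v0 b2]>>%VS.
Proof.
move=> AB0 Bdef v0A v0nz ds v0s bbB bbs bbnz.
have [x [y [sxy nxy]]] := dec_ex ds.
rewrite sxy Vw_span // in v0s bbs.
have [y' ey'] := wedge_rep nxy v0s v0nz.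
have nv : wedge v0 y' != 0 by rewrite -ey'.
move: bbs; rewrite -(Vw_span nxy) ey' (Vw_span nv) => /span2P [al [be bbdef]].
rewrite sxy ey'.
have benz : be != 0.
  apply: contra bbnz => /eqP be0; rewrite -memv0 -AB0 memv_cap bbB andbT.
  by rewrite bbdef be0 scale0r addr0 memvZ.
have e1 : wedge v0 bb = be *: wedge v0 y'.
  by rewrite bbdef wedgeDr !wedgeZr wedgeii scaler0 add0r.
move: bbB; rewrite Bdef => /span2P [ga [de bbdef2]].
apply: (@span2_mem _ _ _ _ _ (be^-1 * ga) (be^-1 * de)).
rewrite -!scalerA -scalerDr -!wedgeZr -wedgeDr -bbdef2 e1 scalerA mulVf // scale1r //.
Qed.

End Aux.

From Stdlib Require Import Classical.
From mathcomp Require Import zify.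
Section Main.
Variables (F : finFieldType) (m : nat) (E E1 : {vspace 'M[F]_m}).
Hypotheses (sub : (E <= E1)%VS) (dimE1 : \dim E1 = (\dim E).+1)
  (decE : decomposable_space E) (ndecE1 : ~ decomposable_space E1).

Lemma isoE w : w \in E -> iso w.
Proof.
move=> wE; have [-> | nz] := eqVneq w 0; [exact: iso0 | exact: dec_iso (decE wE nz)].
Qed.

Lemma decE' w : w \in E -> w != 0 -> exists a b, w = wedge a b /\ wedge a b != 0.
Proof. by move=> wE nz; apply: dec_ex; apply: decE. Qed.

Lemma claimK v : v \in VE E -> v != 0 -> exists y, wedge v y \in E /\ wedge v y != 0.
Proof.
pose Z (u : 'rV[F]_m) := (u == 0) || [exists y, (wedge u y \in E) && (wedge u y != 0)].
pose ZV := <<[seq u <- enum 'rV[F]_m | Z u]>>%VS.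
have ZP u : Z u -> u != 0 -> exists y, wedge u y \in E /\ wedge u y != 0.
  by rewrite /Z => /orP [-> // | /existsP [y /andP [H1 H2]]] _; exists y.
have ZI u y : wedge u y \in E -> wedge u y != 0 -> Z u.
  by move=> H1 H2; apply/orP; right; apply/existsP; exists y; rewrite H1 H2.
have ZV_Z : forall u, u \in ZV -> Z u.
  apply: span_closed.
  - by rewrite /Z eqxx.
  - move=> u v' Zu Zv.
    have [-> | unz] := eqVneq u 0; first by rewrite add0r.
    have [-> | vnz] := eqVneq v' 0; first by rewrite addr0.
    have [-> | uvnz] := eqVneq (u + v') 0; first by rewrite /Z eqxx.
    have [y1 [e1E e1nz]] := ZP u Zu unz; have [y2 [e2E e2nz]] := ZP v' Zv vnz.
    have capnz := meet e1nz e2nz (isoE (memvD e1E e2E)).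
    set p := vpick (<<[:: u; y1]>> :&: <<[:: v'; y2]>>)%VS.
    have pnz : p != 0 by rewrite vpick0.
    have := memv_pick (<<[:: u; y1]>> :&: <<[:: v'; y2]>>)%VS; rewrite -/p memv_cap => /andP[p1 p2].
    have [x1 ex1] := wedge_rep e1nz p1 pnz; have [x2 ex2] := wedge_rep e2nz p2 pnz.
    have n1 : wedge p x1 != 0 by rewrite -ex1.
    have n2 : wedge p x2 != 0 by rewrite -ex2.
    have : u \in <<[:: p; x1]>>%VS by rewrite -(Vw_span n1) -ex1 (Vw_span e1nz) span2_l.
    move=> /span2P [a1 [b1 ud]].
    have : v' \in <<[:: p; x2]>>%VS by rewrite -(Vw_span n2) -ex2 (Vw_span e2nz) span2_l.
    move=> /span2P [a2 [b2 vd]].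
    have wE : wedge (u + v') p \in E.
      rewrite ud vd !wedgeDl !wedgeZl !wedgeii !scaler0 !add0r (wedgeC p x1) (wedgeC p x2).
      rewrite -ex1 -ex2 rpredD // rpredZ // rpredN //.
    have [wz | wnz] := eqVneq (wedge (u + v') p) 0; last exact: (ZI _ _ wE wnz).
    have := wz; move/wedge_eq0; rewrite (negbTE pnz) /= => /vlineP [t uvt].
    have tnz : t != 0 by apply: contra uvnz => /eqP t0; rewrite uvt t0 scale0r.
    apply: (ZI _ (t^-1 *: x1)); rewrite uvt wedgeZl wedgeZr scalerA mulfV // scale1r -ex1 //.
  - move=> c u Zu.
    have [-> | cnz] := eqVneq c 0; first by rewrite scale0r /Z eqxx.
    have [-> | unz] := eqVneq u 0; first by rewrite scaler0 /Z eqxx.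
    have [y [yE ynz]] := ZP u Zu unz.
    by apply: (ZI _ (c^-1 *: y)); rewrite wedgeZl wedgeZr scalerA mulfV // scale1r.
  - by move=> x; rewrite mem_filter => /andP[].
have VE_ZV : (VE E <= ZV)%VS.
  apply/subv_sumP => w /andP [wE wnz]; apply/subvP => u uVw.
  apply: memv_span; rewrite mem_filter mem_enum andbT.
  have [-> | unz] := eqVneq u 0; first by rewrite /Z eqxx.
  have [a [b [wab nab]]] := decE' wE wnz.
  move: uVw; rewrite wab Vw_span // => uab.
  have [y ey] := wedge_rep nab uab unz.
  by apply: (ZI _ y); rewrite -ey -wab.
by move=> vVE vnz; apply: ZP => //; apply: ZV_Z; apply: (subvP VE_ZV).
Qed.

Section W0.
Variable w0 : 'M[F]_m.
Hypotheses (dw0 : decomposable w0) (w0E1 : w0 \in E1) (w0E : w0 \notin E).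

Lemma E1_dec w : w \in E1 -> exists l e, e \in E /\ w = e + l *: w0.
Proof.
move=> wE1.
have sE : (E + <[w0]> <= E1)%VS by rewrite subv_add sub -memvE w0E1.
have lt : (\dim E < \dim (E + <[w0]>))%N.
  rewrite (ltn_leqif (dimv_leqif_sup (addvSl E <[w0]>))).
  apply: contra w0E => H; apply: (subvP H); apply: (subvP (addvSr E <[w0]>)).
  exact: memv_line.
have : (E1 <= E + <[w0]>)%VS.
  by rewrite -(geq_leqif (dimv_leqif_sup sE)) dimE1.
move=> /subvP /(_ w wE1) /memv_addP [e eE [l' /vlineP [l ->] ->]].
by exists l, e.
Qed.

Definition Sset := [set s : 'M[F]_m | (s \in E) && iso (w0 + s)].
Definition Svs := <<enum Sset>>%VS.

Lemma iso_w0 : iso w0. Proof. exact: dec_iso. Qed.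

Lemma memSvs s : (s \in Svs) = (s \in Sset).
Proof.
apply/idP/idP; last by move=> H; apply: memv_span; rewrite mem_enum.
apply: (span_closed (P := fun s => s \in Sset)).
- rewrite inE mem0v /= addr0; exact: iso_w0.
- move=> u v; rewrite !inE => /andP[uE iu] /andP[vE iv]; rewrite memvD //=.
  rewrite addrA; apply: iso3 => //; [exact: iso_w0 | exact: isoE | exact: isoE |].
  by apply: isoE; rewrite memvD.
- move=> c u; rewrite !inE => /andP[uE iu]; rewrite memvZ //=.
  by apply: isoAZ => //; [exact: iso_w0 | exact: isoE].
- by move=> x; rewrite mem_enum.
Qed.

Lemma cardS : #|Sset| = (#|F| ^ \dim Svs)%N.
Proof. by rewrite -card_vspace; apply: eq_card => s; rewrite memSvs. Qed.

Lemma card_dd : #|dec_diff E E1| = ((#|F|).-1 * #|F| ^ \dim Svs)%N.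
Proof.
pose f (p : F * 'M[F]_m) := p.1 *: (w0 + p.2).
have -> : dec_diff E E1 = f @: setX [set~ 0] Sset.
  apply/setP => w; rewrite inE; apply/idP/imsetP.
  - move=> /andP [/andP [wE1 wE] dw].
    have [l [e [eE wdef]]] := E1_dec wE1; subst w.
    have lnz : l != 0.
      by apply: contra wE => /eqP l0; rewrite l0 scale0r addr0.
    exists (l, l^-1 *: e).
      rewrite inE /= !inE lnz /= memvZ //=.
      have -> : w0 + l^-1 *: e = l^-1 *: (e + l *: w0).
        by rewrite scalerDr scalerA mulVf // scale1r addrC.
      by apply: isoZ; apply: dec_iso.
    by rewrite /f /= scalerDr scalerA mulfV // scale1r addrC.
  - move=> [[l s]]; rewrite inE /= !inE => /andP [lnz /andP [sE iss]] ->.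
    have wE : l *: (w0 + s) \notin E.
      apply: contra w0E => H.
      have : l^-1 *: (l *: (w0 + s)) - s \in E by rewrite memvB // memvZ.
      by rewrite scalerA mulVf // scale1r addrK.
    rewrite /f /= wE andbT memvZ ?memvD //=; last exact: (subvP sub).
    apply: iso_dec; first exact: isoZ.
    by apply: contra wE => /eqP ->; rewrite mem0v.
rewrite card_in_imset ?cardsX ?cardsC1 ?cardS //.
move=> [l s] [l' s'] /setXP [lnz sS] /setXP [lnz' sS'] H.
move: lnz lnz' sS sS' H; rewrite /f /= !inE => lnz lnz' /andP[sE _] /andP[sE' _] H.
have ll : l = l'.
  apply/eqP; apply: contraR w0E => neq.
  have : (l - l') *: w0 \in E.
    have -> : (l - l') *: w0 = l' *: s' - l *: s.
      by rewrite scalerBl; apply: zmod_helper; move: H; rewrite !scalerDr.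
    by rewrite memvB // memvZ.
  move=> /(memvZ (l - l')^-1); rewrite scalerA mulVf ?subr_eq0 // scale1r //.
subst l'; congr (_, _); move/(scalerI lnz): H => H; exact: (addrI _ H).
Qed.

Lemma part_i : (\dim Svs <= 2)%N.
Proof.
rewrite leqNgt; apply/negP => H3.
have [xi [xiE [xinz nixi]]] : exists xi, xi \in E /\ xi != 0 /\ ~~ iso (w0 + xi).
  have [w [wE1 [wnz ndw]]] : exists w, w \in E1 /\ w != 0 /\ ~~ decomposable w.
    apply: NNPP => H; apply: ndecE1 => w wE1 wnz; apply: NNPP => nd; apply: H.
    by exists w; split=> //; split=> //; apply/negP.
  have [l [e [eE wdef]]] := E1_dec wE1; subst w.
  have lnz : l != 0.
    apply: contra ndw => /eqP l0; move: wnz; rewrite l0 scale0r addr0 => wnz.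
    exact: decE.
  have nix : ~~ iso (w0 + l^-1 *: e).
    apply: contra ndw => H; apply: iso_dec wnz.
    have -> : e + l *: w0 = l *: (w0 + l^-1 *: e).
      by rewrite scalerDr scalerA mulfV // scale1r addrC.
    exact: isoZ.
  exists (l^-1 *: e); split; first by rewrite memvZ.
  split=> //; apply: contra nix => /eqP ->; rewrite addr0; exact: iso_w0.
have [a [b [w0ab nab]]] := dec_ex dw0.
have [c [d [xicd ncd]]] := decE' xiE xinz.
set P := <<[:: a; b]>>%VS; set X := <<[:: c; d]>>%VS.
have dP : \dim P = 2%N by exact: dim_span2.
have dX : \dim X = 2%N by exact: dim_span2.
have PX0 : (P :&: X = 0)%VS.
  apply/eqP; apply: contraR nixi => cnz.
  rewrite w0ab xicd; apply: (@meet_iso _ _ _ _ _ _ (vpick (P :&: X))) => //.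
  - by rewrite vpick0.
  - by have := memv_pick (P :&: X); rewrite memv_cap => /andP[].
  - by have := memv_pick (P :&: X); rewrite memv_cap => /andP[].
have SE s : s \in Sset -> s \in E by rewrite inE => /andP[].
have Sdec s : s \in Sset -> s != 0 -> decomposable s by move=> /SE sE; apply: decE.
have dVw s : s \in Sset -> s != 0 -> \dim (Vw s) = 2%N.
  move=> sS snz; have [x [y [-> nxy]]] := dec_ex (Sdec s sS snz).
  by rewrite Vw_span // dim_span2.
have meetP s : s \in Sset -> s != 0 -> (P :&: Vw s != 0)%VS.
  move=> sS snz; have [x [y [sxy nxy]]] := dec_ex (Sdec s sS snz).
  rewrite sxy Vw_span //; apply: meet => //.
  by move: sS; rewrite inE w0ab sxy => /andP[].
have meetX s : s \in Sset -> s != 0 -> (X :&: Vw s != 0)%VS.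
  move=> sS snz; have [x [y [sxy nxy]]] := dec_ex (Sdec s sS snz).
  rewrite sxy Vw_span //; apply: meet => //.
  by rewrite -xicd -sxy; apply: isoE; rewrite memvD // SE.
have meetS s s' : s \in Sset -> s != 0 -> s' \in Sset -> s' != 0 -> (Vw s :&: Vw s' != 0)%VS.
  move=> sS snz s'S s'nz; have [x [y [sxy nxy]]] := dec_ex (Sdec s sS snz).
  have [x' [y' [sxy' nxy']]] := dec_ex (Sdec s' s'S s'nz).
  rewrite sxy sxy' !Vw_span //; apply: meet => //.
  by rewrite -sxy -sxy'; apply: isoE; rewrite memvD // SE.
have pairL s s' p p' r r' : s \in Sset -> s != 0 -> s' \in Sset -> s' != 0 ->
    p \in (P :&: Vw s)%VS -> p != 0 -> p' \in (P :&: Vw s')%VS -> p' != 0 ->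
    r \in (X :&: Vw s)%VS -> r != 0 -> r' \in (X :&: Vw s')%VS -> r' != 0 ->
    <[p]>%VS = <[p']>%VS \/ <[r]>%VS = <[r']>%VS.
  move=> sS snz s'S s'nz; rewrite !memv_cap => /andP[pP ps] pnz /andP[p'P p's] p'nz
    /andP[rX rs] rnz /andP[r'X r's] r'nz.
  case: (eqVneq <[p]>%VS <[p']>%VS) => [-> | npp]; first by left.
  case: (eqVneq <[r]>%VS <[r']>%VS) => [-> | nrr]; first by right.
  exfalso; move: (meetS s s' sS snz s'S s'nz); apply/negP; rewrite negbK -subv0.
  have sPX : (P + X <= Vw s + Vw s')%VS.
    rewrite subv_add; apply/andP; split.
      apply: subv_trans (lines_span dP pP p'P pnz p'nz npp) _.
      by apply: addvS; rewrite -memvE.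
    apply: subv_trans (lines_span dX rX r'X rnz r'nz nrr) _.
    by apply: addvS; rewrite -memvE.
  have := dimvS sPX; have := dimv_sum_cap P X; rewrite PX0 dimv0 addn0 dP dX => ->.
  have := dimv_sum_cap (Vw s) (Vw s'); rewrite !dVw // => E0 le4.
  rewrite subv0 -dimv_eq0; apply/eqP.
  move: (\dim (Vw s + Vw s')) (\dim (Vw s :&: Vw s')) E0 le4 => x y E0' le4'; clear -E0' le4'; lia.
have fin v0 A B b1 b2 : (A :&: B = 0)%VS -> B = <<[:: b1; b2]>>%VS -> v0 \in A -> v0 != 0 ->
    (forall s, s \in Sset -> s != 0 -> v0 \in Vw s /\ exists2 bb, bb \in (B :&: Vw s)%VS & bb != 0) ->
    False.
  move=> AB0 Bdef v0A v0nz H.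
  have : (Svs <= <<[:: wedge v0 b1; wedge v0 b2]>>)%VS.
    apply/subvP => s; rewrite memSvs => sS.
    have [-> | snz] := eqVneq s 0; first exact: mem0v.
    have [v0s [bb]] := H s sS snz; rewrite memv_cap => /andP[bbB bbs] bbnz.
    exact: (funnel AB0 Bdef v0A v0nz (Sdec s sS snz) v0s bbB bbs bbnz).
  move=> /dimvS; move: (dim_span [:: wedge v0 b1; wedge v0 b2]) => /= le2 le.
  by move: H3; rewrite ltnNge (leq_trans le le2).
have pick_in U : (U != 0)%VS -> vpick U \in U /\ vpick U != 0.
  by move=> Unz; rewrite memv_pick vpick0.
have [s0 [s0S s0nz]] : exists s0, s0 \in Sset /\ s0 != 0.
  exists (vpick Svs); rewrite -memSvs memv_pick vpick0 -dimv_eq0; split=> //.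
  by move: H3; case: (\dim Svs).
pose pp s := vpick (P :&: Vw s); pose rr s := vpick (X :&: Vw s).
have ppP s : s \in Sset -> s != 0 -> pp s \in (P :&: Vw s)%VS /\ pp s != 0.
  by move=> sS snz; apply: pick_in; apply: meetP.
have rrP s : s \in Sset -> s != 0 -> rr s \in (X :&: Vw s)%VS /\ rr s != 0.
  by move=> sS snz; apply: pick_in; apply: meetX.
have inVw v s : v \in (X :&: Vw s)%VS \/ v \in (P :&: Vw s)%VS -> v \in Vw s.
  by case; rewrite memv_cap => /andP[].
have line_in (v v' : 'rV[F]_m) (U : {vspace 'rV[F]_m}) : <[v]>%VS = <[v']>%VS -> v \in U -> v' \in U.
  by move=> e vU; rewrite memvE -e -memvE.
have [HA | HB] := classic (forall s s', s \in Sset -> s != 0 -> s' \in Sset -> s' != 0 ->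
                         <[pp s]>%VS = <[pp s']>%VS).
- have [p0in p0nz] := ppP s0 s0S s0nz.
  apply: (@fin (pp s0) P X c d PX0 erefl) => //.
    by move: p0in; rewrite memv_cap => /andP[].
  move=> s sS snz; split.
    apply: (line_in (pp s)); first by rewrite (HA s s0).
    by have [+ _] := ppP s sS snz; rewrite memv_cap => /andP[].
  by exists (rr s); have [] := rrP s sS snz.
- have [s1 [s2 [s1S [s1nz [s2S [s2nz neq12]]]]]] : exists s1 s2, s1 \in Sset /\ s1 != 0 /\
      s2 \in Sset /\ s2 != 0 /\ <[pp s1]>%VS <> <[pp s2]>%VS.
    apply: NNPP => Hn; apply: HB => s s' sS snz s'S s'nz; apply: NNPP => ne.
    by apply: Hn; exists s, s'.
  have [p1in p1nz] := ppP s1 s1S s1nz; have [p2in p2nz] := ppP s2 s2S s2nz.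
  have [r1in r1nz] := rrP s1 s1S s1nz; have [r2in r2nz] := rrP s2 s2S s2nz.
  have r12 : <[rr s1]>%VS = <[rr s2]>%VS.
    by case: (pairL s1 s2 _ _ _ _ s1S s1nz s2S s2nz p1in p1nz p2in p2nz r1in r1nz r2in r2nz).
  apply: (@fin (rr s1) X P a b) => //.
  - by rewrite capvC.
  - by move: r1in; rewrite memv_cap => /andP[].
  move=> s sS snz; split; last by exists (pp s); have [] := ppP s sS snz.
  have [pin pnz] := ppP s sS snz; have [rin rnz] := rrP s sS snz.
  have rs : <[rr s]>%VS = <[rr s1]>%VS.
    case: (eqVneq <[pp s]>%VS <[pp s1]>%VS) => [e1 | ne1].
      have ne2 : <[pp s]>%VS <> <[pp s2]>%VS by rewrite e1.
      case: (pairL s s2 _ _ _ _ sS snz s2S s2nz pin pnz p2in p2nz rin rnz r2in r2nz) => //.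
      by rewrite r12.
    case: (pairL s s1 _ _ _ _ sS snz s1S s1nz pin pnz p1in p1nz rin rnz r1in r1nz) => //.
    by move/eqP: ne1.
  apply: (line_in (rr s)) => //.
  by move: rin; rewrite memv_cap => /andP[].
Qed.

Lemma part_ii : (Vw w0 <= VE E)%VS -> (2 <= \dim Svs)%N.
Proof.
move=> H.
have [a [b [w0ab nab]]] := dec_ex dw0.
have aV : a \in VE E by apply: (subvP H); rewrite w0ab; apply: (subvP (span_Vw a b)); exact: span2_l.
have bV : b \in VE E by apply: (subvP H); rewrite w0ab; apply: (subvP (span_Vw a b)); exact: span2_r.
have anz : a != 0 by apply: contra nab => /eqP ->; rewrite wedge0l.
have bnz : b != 0 by apply: contra nab => /eqP ->; rewrite wedge0r.
have [y [yE ynz]] := claimK aV anz.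
have [z [zE znz]] := claimK bV bnz.
have S1 : wedge a y \in Sset.
  by rewrite inE yE /= w0ab -wedgeDr iso_wedge.
have S2 : wedge b z \in Sset.
  rewrite inE zE /= w0ab.
  have -> : wedge a b + wedge b z = wedge (a - z) b.
    by apply/matrixP => i j; rewrite !wedgeE [in LHS]mxE !wedgeE !mxE; ring.
  exact: iso_wedge.
have fr : free [:: wedge a y; wedge b z].
  rewrite free_cons seq1_free znz andbT span_seq1; apply/negP => /vlineP [k ek].
  have knz : k != 0 by apply: contra ynz => /eqP k0; rewrite ek k0 scale0r.
  have w3 : wedge3_zero (wedge a y) b.
    apply: (@w3zZ _ _ k^-1); first by rewrite invr_eq0.
    rewrite ek scalerA mulVf // scale1r; apply: w3z_span; exact: span2_l.
  have /span2P [al [be bd]] := w3z_mem ynz w3.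
  have benz : be != 0.
    apply: contra nab => /eqP be0; rewrite bd be0 scale0r addr0 wedgeZr wedgeii scaler0 //.
  move: w0E; rewrite w0ab bd wedgeDr !wedgeZr wedgeii scaler0 add0r.
  by rewrite memvZ.
have sub2 : (<<[:: wedge a y; wedge b z]>> <= Svs)%VS.
  apply/span_subvP => x; rewrite !inE memSvs => /orP [/eqP -> | /eqP ->] //.
by have := dimvS sub2; rewrite (eqP fr).
Qed.

End W0.
End Main.

Theorem lemma6p3 (F : finFieldType) (m : nat) (E E1 : {vspace 'M[F]_m}) :
  (4 < m)%N ->
  (forall w, w \in E1 -> alternating w) ->
  (E <= E1)%VS ->
  \dim E1 = (\dim E).+1 ->
  decomposable_space E ->
  ~ decomposable_space E1 ->
  (#|dec_diff E E1| <= #|F| ^ 2 * (#|F| - 1))%N /\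
  ((exists w, [/\ w \in E1, w \notin E, decomposable w & (Vw w <= VE E)%VS]) ->
   #|dec_diff E E1| = (#|F| ^ 2 * (#|F| - 1))%N).
Proof.
move=> _ _ sub dimE1 decE ndecE1.
have q0 : (0 < #|F|)%N by apply/card_gt0P; exists 0.
split.
  case: (set_0Vmem (dec_diff E E1)) => [-> | [w0]]; first by rewrite cards0.
  rewrite inE => /andP [/andP [w0E1 w0E] dw0].
  rewrite (card_dd sub dimE1 decE dw0 w0E1 w0E) mulnC subn1 leq_mul2r.
  apply/orP; right; apply: leq_pexp2l => //.
  exact: (part_i sub dimE1 decE ndecE1 dw0 w0E1 w0E).
move=> [w0 [w0E1 w0E dw0 HV]].
rewrite (card_dd sub dimE1 decE dw0 w0E1 w0E) mulnC subn1.
have d2 : \dim (Svs E w0) = 2%N.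
  apply/eqP; rewrite eqn_leq (part_i sub dimE1 decE ndecE1 dw0 w0E1 w0E).
  exact: (part_ii decE dw0 w0E HV).
by rewrite d2.
Qed.
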